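(* Let $n,k,r\ge 3$ be integers with $r,k\le 0.01\log n$, and let $\mathcal{H}=\mathcal{H}(n,k,r)$. (i) If $r\le k$, then $\dfrac{n^{2k}}{r^{2k}}\le e(\mathcal{H})\le \dfrac{k\,2^{r+k}}{r!}\,n^{2k}$. (ii) If $r=k+1$, then $\dfrac{n^{2k}}{r^{2k}}\le e(\mathcal{H})\le \dfrac{k\,2^{r+k}}{r!}\,n^{2k}\log n$. (iii) If $k+1<r\le 2k$, then $k\binom{n}{r}n^{k-1}\le e(\mathcal{H})\le \dfrac{k\,2^{r+k+1}}{r!}\,n^{r+k-1}$.
   Context: Logarithms are to base 2. For integers $n,k,r\ge 3$, $\mathcal{H}(n,k,r)$ is the $r$-uniform hypergraph with vertex set $[n]^k=\{1,\dots,n\}^k$ whose edges are all $r$-element subsets of $[n]^k$ whose points lie on a common line in $\mathbb{R}^k$. $e(\cdot)$ denotes the number of edges. *)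

(* Defs.v *)
From mathcomp Require Import all_boot.
From Stdlib Require Import Reals ClassicalEpsilon.

Set Implicit Arguments.
Unset Strict Implicit.
Unset Printing Implicit Defensive.

(* Points of [n]^k: functions 'I_k -> 'I_n; the point x has real
   coordinates (x i + 1), so coordinates range over {1,...,n}. *)
Definition point (n k : nat) := {ffun 'I_k -> 'I_n}.

Definition coord (n k : nat) (x : point n k) (i : 'I_k) : R :=
  INR (nat_of_ord (x i) + 1).

Definition on_common_line (n k : nat) (S : {set point n k}) : Prop :=
  exists (p d : 'I_k -> R),
    (exists i : 'I_k, d i <> 0%R) /\
    forall x, x \in S -> exists t : R, forall i : 'I_k,
      coord x i = (p i + t * d i)%R.

Definition on_common_lineb (n k : nat) (S : {set point n k}) : bool :=
  if excluded_middle_informative (on_common_line S) then true else false.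

Definition edges (n k r : nat) : {set {set point n k}} :=
  [set S : {set point n k} | (#|S| == r) && on_common_lineb S].

Definition eH (n k r : nat) : nat := #|edges n k r|.

Definition log2 (x : R) : R := (ln x / ln 2)%R.

(* Main.v *)
Set Warnings "-notation-overridden".
Require Import Defs.
From Stdlib Require Import Lra Lia ZArith ClassicalEpsilon.
From mathcomp Require Import all_boot zify.
From Stdlib Require Import Reals.
Notation "m ^ n" := (expn m n) : nat_scope.
Delimit Scope nat_scope with N.
Set Implicit Arguments.
Unset Strict Implicit.
Unset Printing Implicit Defensive.

Lemma expn_mono m1 m2 e : (m1 <= m2)%N -> (m1 ^ e <= m2 ^ e)%N.
Proof. by move=> H; elim: e => // e IH; rewrite !expnS leq_mul. Qed.

Lemma ffact_le_exp m j : (m ^_ j <= m ^ j)%N.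
Proof.
elim: j m => [|j IH] m; first by rewrite ffactn0 expn0.
rewrite ffactnS expnS leq_mul2l; apply/orP; right.
apply: leq_trans (IH _) _; apply: expn_mono; exact: leq_pred.
Qed.

Lemma bin_le m j : ('C(m, j) * j`! <= m ^ j)%N.
Proof. rewrite bin_ffact; exact: ffact_le_exp. Qed.

Lemma sum_cut (f : nat -> nat) t M :
  (forall a, (t < a)%N -> f a = 0%N) -> (\sum_(a < M) f a <= \sum_(a < t.+1) f a)%N.
Proof.
move=> H.
elim: M => [|M IH]; first by rewrite big_ord0.
rewrite big_ord_recr /=.
case: (leqP M t) => HM.
  rewrite -(big_ord_recr M (fun a => f a)) -!(big_mkord xpredT).
  rewrite (big_cat_nat (n:=M.+1) (m:=0) (p:=t.+1)) //=.
  exact: leq_addr.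
by rewrite H // addn0.
Qed.

Lemma geom_sum q t : (2 <= q)%N -> (\sum_(a < t.+1) q ^ a <= 2 * q ^ t)%N.
Proof.
move=> Hq; elim: t => [|t IH]; first by rewrite big_ord_recr big_ord0.
rewrite big_ord_recr /= expnS.
have H2 : (2 * q ^ t <= q * q ^ t)%N by rewrite leq_mul2r Hq orbT.
move: H2 IH; move: (q ^ t) => X; move: (q * X) => Y; move: (\sum_(a < t.+1) q ^ a) => Z0; lia.
Qed.

Lemma halving_sum (y : nat -> nat) Y M :
  (forall a, (y a * 2 ^ a <= Y)%N) -> (\sum_(a < M) y a <= 2 * Y)%N.
Proof.
move=> H.
suff : (2 ^ M * \sum_(a < M) y a + 2 * Y <= 2 ^ M.+1 * Y)%N.
  rewrite expnS -mulnA => H2.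
  have : (2 ^ M * \sum_(a < M) y a <= 2 ^ M * (2 * Y))%N by lia.
  by rewrite leq_pmul2l // expn_gt0.
elim: M => [|M IH]; first by rewrite big_ord0 muln0 add0n expn1.
rewrite big_ord_recr /= !expnS.
have := H M; move: IH; rewrite expnS.
move: (2 ^ M) (\sum_(i < M) y i) (y M) => X Z0 yM.
nia.
Qed.

Lemma card_bigcup_le (I T : finType) (F : I -> {set T}) :
  (#|\bigcup_i F i| <= \sum_i #|F i|)%N.
Proof.
elim/big_rec2: _ => [|i s X _ IH]; first by rewrite cards0.
apply: leq_trans (leq_card_setU _ _) _.
by rewrite leq_add2l.
Qed.

Definition wd (a : nat) := (2^(a.+2) - 2).+1.
Definition offz (a : nat) : Z := (Z.of_nat (2^(a.+1)) - 1)%Z.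

Definition term (n k r a : nat) := (n.+1 ^ k * wd a ^ k * 'C(n %/ 2 ^ a, r.-1))%N.

Lemma term_bound n k r a :
  ((r.-1)`! * term n k r a <= n.+1 ^ k * 4 ^ k * (2 ^ a) ^ k * (n %/ 2 ^ a) ^ r.-1)%N.
Proof.
have hW : (wd a ^ k <= 4 ^ k * (2 ^ a) ^ k)%N.
  rewrite -expnMn; apply: expn_mono; rewrite /wd.
  have : (2 ^ a.+2 = 4 * 2 ^ a)%N by rewrite !expnS mulnA.
  have : (1 <= 2 ^ a)%N by rewrite expn_gt0.
  lia.
have hC := bin_le (n %/ 2 ^ a) r.-1.
rewrite /term.
have -> : ((r.-1)`! * (n.+1 ^ k * wd a ^ k * 'C(n %/ 2 ^ a, r.-1)) =
   n.+1 ^ k * wd a ^ k * ('C(n %/ 2 ^ a, r.-1) * (r.-1)`!))%N by lia.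
rewrite -(mulnA _ (4 ^ k)).
by apply: leq_mul => //; apply: leq_mul.
Qed.

Lemma div_exp_small n s a t : (0 < s)%N -> (n %/ s < 2 ^ t.+1)%N -> (t < a)%N ->
  (n %/ 2 ^ a < s)%N.
Proof.
move=> Hs H1 H2.
have H3 : (2 ^ t.+1 <= 2 ^ a)%N by rewrite leq_exp2l.
have H4 : (n < 2 ^ a * s)%N by rewrite -ltn_divLR //; apply: leq_trans H1 H3.
by rewrite ltn_divLR ?expn_gt0 // mulnC.
Qed.

Lemma mul_div_le n a : (2 ^ a * (n %/ 2 ^ a) <= n)%N.
Proof. by rewrite mulnC leq_divM. Qed.

Lemma NI1 s k : (2 <= s)%N -> (s < k)%N ->
  ((s.+1) * 2 * 4 ^ k <= k * 2 ^ (s.+1 + k) * s ^ (k - s))%N.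
Proof.
move=> Hs Hk.
have h1 : (2 ^ (k - s) <= s ^ (k - s))%N by apply: expn_mono.
have h2 : (2 ^ (s.+1 + k) * 2 ^ (k - s) = 2 * 4 ^ k)%N.
  rewrite -expnD (_ : s.+1 + k + (k - s) = (2 * k).+1)%N; last lia.
  by rewrite expnS expnM.
have : (k * 2 ^ (s.+1 + k) * 2 ^ (k - s) <= k * 2 ^ (s.+1 + k) * s ^ (k - s))%N.
  by rewrite leq_mul2l h1 orbT.
rewrite -mulnA h2.
move: (2 ^ (s.+1 + k)) (s ^ (k - s)) (4 ^ k) => X Y Z0.
nia.
Qed.

Lemma sum_case1 n k s : (2 <= s)%N -> (s < k)%N -> (s <= n)%N ->
  ((s.+1)`! * \sum_(a < n.+1) term n k s.+1 a <= k * 2 ^ (s.+1 + k) * n.+1 ^ (2 * k))%N.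
Proof.
move=> Hs Hk Hn.
have s0 : (0 < s)%N by lia.
set e := (k - s)%N.
set t := trunc_log 2 (n %/ s).
have ns0 : (0 < n %/ s)%N by rewrite divn_gt0.
have Ht1 : (2 ^ t <= n %/ s)%N by apply: trunc_logP.
have Ht2 : (n %/ s < 2 ^ t.+1)%N by apply: trunc_log_ltn.
have Hst : (s * 2 ^ t <= n)%N by rewrite mulnC -leq_divRL.
have Hcut : (\sum_(a < n.+1) term n k s.+1 a <= \sum_(a < t.+1) term n k s.+1 a)%N.
  apply: sum_cut => a Ha; rewrite /term /= bin_small ?muln0 //.
  exact: div_exp_small Ht2 Ha.
have Hterm : forall a, (s`! * term n k s.+1 a <= n.+1 ^ k * 4 ^ k * n ^ s * (2 ^ e) ^ a)%N.
  move=> a; apply: leq_trans (term_bound n k s.+1 a) _ => /=.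
  have -> : ((2 ^ a) ^ k = (2 ^ e) ^ a * (2 ^ a) ^ s)%N.
    rewrite -!expnM -expnD; congr (2 ^ _).
    have : k = (e + s)%N by rewrite /e subnK // ltnW.
    move=> ->; lia.
  have h : ((2 ^ a) ^ s * (n %/ 2 ^ a) ^ s <= n ^ s)%N.
    by rewrite -expnMn; apply: expn_mono; apply: mul_div_le.
  move: h; move: ((2 ^ a) ^ s) ((n %/ 2 ^ a) ^ s) ((2 ^ e) ^ a) (n.+1 ^ k * 4 ^ k) => X Y Z0 W.
  nia.
have Hsum : (s`! * \sum_(a < t.+1) term n k s.+1 a <= n.+1 ^ k * 4 ^ k * n ^ s * (2 * (2 ^ e) ^ t))%N.
  rewrite big_distrr /=.
  apply: (@leq_trans (\sum_(a < t.+1) (n.+1 ^ k * 4 ^ k * n ^ s * (2 ^ e) ^ a))%N).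
    by apply: leq_sum => a _; exact: Hterm a.
  rewrite -big_distrr /= leq_mul2l; apply/orP; right.
  apply: geom_sum.
  have : (1 <= e)%N by rewrite /e; lia.
  move=> he; have := leq_pexp2l (isT : (0 < 2)%N) he; by rewrite expn1.
have Hse : (s ^ e * (2 ^ e) ^ t <= n ^ e)%N.
  by rewrite expnAC -expnMn; apply: expn_mono.
have HnN : (n ^ s * n ^ e <= n.+1 ^ k)%N.
  by rewrite -expnD /e subnKC ?(ltnW Hk) //; apply: expn_mono.
have H5 : (s ^ e * ((s.+1)`! * \sum_(a < n.+1) term n k s.+1 a) <=
           s.+1 * 2 * 4 ^ k * n.+1 ^ (2 * k))%N.
  rewrite factS.
  have Hc := leq_mul (leqnn (s ^ e * s.+1)) (leq_trans (leq_mul (leqnn s`!) Hcut) Hsum).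
  rewrite mul2n -addnn expnD.
  move: Hc Hse HnN.
  move: (s ^ e) (s`!) (\sum_(a < n.+1) term n k s.+1 a) (\sum_(a < t.+1) term n k s.+1 a)
    ((2 ^ e) ^ t) (n ^ s) (n ^ e) (n.+1 ^ k) (4 ^ k) => A B C D E F G H I h1 h2 h3.
  have h4 : (A * E * F <= H)%N.
    apply: leq_trans h3; rewrite mulnC; apply: leq_mul => //.
  have h5 : (A * s.+1 * (H * I * F * (2 * E)) = s.+1 * 2 * I * H * (A * E * F))%N by lia.
  rewrite h5 in h1.
  have h6 : (s.+1 * 2 * I * H * (A * E * F) <= s.+1 * 2 * I * H * H)%N by apply: leq_mul.
  have h7 : (A * (s.+1 * B * C) = A * s.+1 * (B * C))%N by lia.
  rewrite h7; apply: leq_trans h1 _; apply: leq_trans h6 _; lia.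
have H6 := NI1 Hs Hk.
have : (s.+1 * 2 * 4 ^ k * n.+1 ^ (2 * k) <= s ^ e * (k * 2 ^ (s.+1 + k) * n.+1 ^ (2 * k)))%N.
  have h8 : (s ^ e * (k * 2 ^ (s.+1 + k) * n.+1 ^ (2 * k)) =
     (k * 2 ^ (s.+1 + k) * s ^ (k - s)) * n.+1 ^ (2 * k))%N by rewrite /e; lia.
  by rewrite h8; apply: leq_mul.
move=> H7.
have : (0 < s ^ e)%N by rewrite expn_gt0 s0.
move=> Hpos.
by rewrite -(leq_pmul2l Hpos); apply: leq_trans H5 H7.
Qed.

Lemma sum_case2 n k : (1 <= k)%N ->
  (k`! * \sum_(a < n.+1) term n k k.+1 a <= (trunc_log 2 n).+1 * (4 ^ k * n.+1 ^ (2 * k)))%N.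
Proof.
move=> Hk.
set t := trunc_log 2 n.
have Ht2 : (n %/ 1 < 2 ^ t.+1)%N by rewrite divn1; apply: trunc_log_ltn.
have Hcut : (\sum_(a < n.+1) term n k k.+1 a <= \sum_(a < t.+1) term n k k.+1 a)%N.
  apply: sum_cut => a Ha; rewrite /term /= bin_small ?muln0 //.
  have := div_exp_small (isT : (0 < 1)%N) Ht2 Ha; lia.
have Hterm : forall a, (k`! * term n k k.+1 a <= 4 ^ k * n.+1 ^ (2 * k))%N.
  move=> a; apply: leq_trans (term_bound n k k.+1 a) _ => /=.
  have h : ((2 ^ a) ^ k * (n %/ 2 ^ a) ^ k <= n.+1 ^ k)%N.
    rewrite -expnMn; apply: expn_mono; have := mul_div_le n a; lia.
  rewrite mul2n -addnn expnD.
  move: h; move: ((2 ^ a) ^ k) ((n %/ 2 ^ a) ^ k) (n.+1 ^ k) (4 ^ k) => X Y Z0 W h.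
  have -> : (Z0 * W * X * Y = W * Z0 * (X * Y))%N by lia.
  have -> : (W * (Z0 * Z0) = W * Z0 * Z0)%N by lia.
  by apply: leq_mul.
apply: (@leq_trans (k`! * \sum_(a < t.+1) term n k k.+1 a)%N).
  by apply: leq_mul.
rewrite big_distrr /=.
apply: (@leq_trans (\sum_(a < t.+1) (4 ^ k * n.+1 ^ (2 * k)))%N).
  by apply: leq_sum => a _; apply: Hterm.
by rewrite sum_nat_const card_ord.
Qed.

Lemma sum_case3 n k s : (k < s)%N ->
  (s`! * \sum_(a < n.+1) term n k s.+1 a <= 2 * (4 ^ k * n.+1 ^ (k + s)))%N.
Proof.
move=> Hks.
rewrite big_distrr /=.
apply: (@halving_sum (fun a => s`! * term n k s.+1 a)%N) => a.
apply: leq_trans (leq_mul (term_bound n k s.+1 a) (leqnn _)) _ => /=.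
have h1 : ((2 ^ a) ^ k * 2 ^ a <= (2 ^ a) ^ s)%N.
  by rewrite -expnSr; apply: leq_pexp2l; rewrite ?expn_gt0.
have h2 : ((2 ^ a) ^ s * (n %/ 2 ^ a) ^ s <= n.+1 ^ s)%N.
  rewrite -expnMn; apply: expn_mono; have := mul_div_le n a; lia.
have h3 : ((2 ^ a) ^ k * 2 ^ a * (n %/ 2 ^ a) ^ s <= n.+1 ^ s)%N.
  by apply: leq_trans h2; apply: leq_mul.
rewrite expnD.
have -> : (n.+1 ^ k * 4 ^ k * (2 ^ a) ^ k * (n %/ 2 ^ a) ^ s * 2 ^ a =
   4 ^ k * n.+1 ^ k * ((2 ^ a) ^ k * 2 ^ a * (n %/ 2 ^ a) ^ s))%N by lia.
by rewrite -mulnA; apply: leq_mul => //; apply: leq_mul.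
Qed.

Lemma NI3 s k : (1 <= k)%N -> (k < s)%N -> ((s.+1) * 4 ^ k <= k * 2 ^ (s.+1 + k))%N.
Proof.
move=> Hk Hks.
suff : ((s.+1) * 2 ^ k <= k * 2 ^ s.+1)%N.
  move=> H; rewrite expnD (_ : 4 = 2 ^ 2)%N // -expnM mulnC expnM.
  rewrite (_ : (2 ^ 2) ^ k = 2 ^ k * 2 ^ k)%N; last by rewrite -expnMn.
  move: H; move: (2 ^ k) (2 ^ s.+1) => X Y H.
  have -> : (X * X * s.+1 = X * (s.+1 * X))%N by lia.
  have -> : (k * (Y * X) = X * (k * Y))%N by lia.
  by apply: leq_mul.
have [d ->] : exists d, s = (k.+1 + d)%N by exists (s - k.+1)%N; lia.
elim: d => [|d IH].
  rewrite addn0 !expnS.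
  move: (2 ^ k) => X; nia.
rewrite addnS expnS.
move: IH; move: (2 ^ k) (2 ^ (k.+1 + d).+1) => X Y IH; nia.
Qed.

Lemma my_div_lt a b c : (0 < b)%R -> (a < c * b)%R -> (a / b < c)%R.
Proof.
move=> Hb H; have Hi : (0 < / b)%R by apply: Rinv_0_lt_compat.
have := Rmult_lt_compat_r _ _ _ Hi H.
have -> : (c * b * / b = c)%R by field; lra.
done.
Qed.

Lemma my_le_div a b c : (0 < b)%R -> (a * b <= c)%R -> (a <= c / b)%R.
Proof.
move=> Hb H; have Hi : (0 < / b)%R by apply: Rinv_0_lt_compat.
have := Rmult_le_compat_r _ _ _ (Rlt_le _ _ Hi) H.
have -> : (a * b * / b = a)%R by field; lra.
done.
Qed.

Lemma INR2 : INR 2 = 2%R. Proof. by rewrite /=; lra. Qed.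

Lemma ln2_pos : (0 < ln 2)%R.
Proof. have := ln_lt_2; lra. Qed.

Lemma INR_expn a m : INR (a ^ m) = (INR a ^ m)%R.
Proof. elim: m => [|m IH]; first by rewrite expn0. by rewrite expnS mult_INR IH /=. Qed.

Lemma INR_pow2 m : INR (2 ^ m) = (2 ^ m)%R.
Proof. by rewrite INR_expn INR2. Qed.

Lemma pow_le_of_log (n m : nat) : (1 <= n)%N -> (INR m <= 0.01 * log2 (INR n))%R ->
  (2 ^ (100 * m) <= n)%N.
Proof.
move=> Hn H.
case: (leqP (2 ^ (100 * m)) n) => // Hlt; exfalso.
have H1 : (INR n < INR (2 ^ (100 * m)))%R by apply: lt_INR; apply/ltP.
have Hn0 : (0 < INR n)%R by apply: lt_0_INR; apply/ltP.
have H2 := ln_increasing _ _ Hn0 H1.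
rewrite INR_pow2 ln_pow in H2; last lra.
rewrite mult_INR in H2.
have E100 : INR 100 = 100%R by rewrite /=; lra.
rewrite E100 in H2.
move: H; rewrite /log2.
have Hl := ln2_pos.
have : (ln (INR n) / ln 2 < 100 * INR m)%R.
  apply: my_div_lt => //; lra.
lra.
Qed.

Lemma log_ge_of_pow (n t : nat) : (2 ^ t <= n)%N -> (INR t <= log2 (INR n))%R.
Proof.
move=> H.
have H0 : (0 < INR (2 ^ t))%R by apply: lt_0_INR; apply/ltP; rewrite expn_gt0.
have H1 : (INR (2 ^ t) <= INR n)%R by apply: le_INR; apply/leP.
have H2 : (ln (INR (2 ^ t)) <= ln (INR n))%R.
  case: (Rle_lt_or_eq_dec _ _ H1) => [h|->]; last lra.
  by left; apply: ln_increasing => //; apply: Rlt_le_trans H0 _; lra.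
rewrite INR_pow2 ln_pow in H2; last lra.
have Hl := ln2_pos.
rewrite /log2; apply: my_le_div => //; lra.
Qed.

Lemma real_div_le (x b c : nat) : (0 < b)%N -> (b * x <= c)%N -> (INR x <= INR c / INR b)%R.
Proof.
move=> Hb H.
have Hb' : (0 < INR b)%R by apply: lt_0_INR; apply/ltP.
apply: my_le_div => //.
rewrite -mult_INR; apply: le_INR; apply/leP; rewrite multE mulnC; exact: H.
Qed.
Section Geo.
Variables (N k : nat).
Local Notation pt := (point N k).

Definition zc (x : pt) (i : 'I_k) : Z := Z.of_nat (x i).

Lemma coord_zc (x : pt) i : coord x i = (IZR (zc x i) + 1)%R.
Proof. by rewrite /coord /zc plus_INR INR_IZR_INZ. Qed.

Lemma pt_eq (x y : pt) : (forall i, zc x i = zc y i) -> x = y.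
Proof. move=> H; apply/ffunP=> i; apply: val_inj; apply: Nat2Z.inj; exact: H. Qed.

Definition par (D v : 'I_k -> Z) := exists l : R, forall i, IZR (v i) = (l * IZR (D i))%R.
Definition nz (v : 'I_k -> Z) := exists i, v i <> 0%Z.
Definition nrm (v : 'I_k -> Z) := \max_(i < k) Z.abs_nat (v i).

Lemma line_par (S : {set pt}) x0 y0 : on_common_line S -> x0 \in S -> y0 \in S -> x0 != y0 ->
  forall x, x \in S -> par (fun i => zc y0 i - zc x0 i)%Z (fun i => zc x i - zc x0 i)%Z.
Proof.
move=> [p [d [[i1 Hd] H]]] Hx0 Hy0 Hne x Hx.
have [t0 E0] := H _ Hx0; have [t1 E1] := H _ Hy0; have [t E] := H _ Hx.
have Ht : (t1 - t0 <> 0)%R.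
  move=> Ht; move/eqP: Hne; apply; apply: pt_eq => i.
  apply: eq_IZR; apply: (Rplus_eq_reg_r 1); rewrite -!coord_zc E0 E1.
  have -> : t1 = t0 by lra.
  by [].
exists ((t - t0) / (t1 - t0))%R => i.
rewrite !minus_IZR.
have e1 : (IZR (zc x i) - IZR (zc x0 i) = (t - t0) * d i)%R.
  have := E i; have := E0 i; rewrite !coord_zc; lra.
have e2 : (IZR (zc y0 i) - IZR (zc x0 i) = (t1 - t0) * d i)%R.
  have := E1 i; have := E0 i; rewrite !coord_zc; lra.
rewrite e1 e2; field; exact: Ht.
Qed.

Lemma min_vec D : nz D -> par D D ->
  exists v, [/\ par D v, nz v & forall w, par D w -> nz w -> (nrm v <= nrm w)%N].
Proof.
move=> HD HDD.
pose P m := if excluded_middle_informative (exists w, [/\ par D w, nz w & nrm w = m])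
  then true else false.
have exP : exists m, P m.
  exists (nrm D); rewrite /P; case: excluded_middle_informative => // [[]].
  by exists D.
case: (ex_minnP exP) => m Pm Hmin.
move: Pm; rewrite /P; case: excluded_middle_informative => // [[v [pv nzv nv]]] _.
exists v; split => // w pw nzw; rewrite nv; apply: Hmin.
rewrite /P; case: excluded_middle_informative => // [[]].
by exists w.
Qed.

Lemma nrm_ge1 v : nz v -> (1 <= nrm v)%N.
Proof.
move=> [i Hi]; apply: leq_trans (leq_bigmax i); lia.
Qed.

Lemma multiple D v : par D v -> nz v ->
  (forall w, par D w -> nz w -> (nrm v <= nrm w)%N) ->
  forall w, par D w -> exists q, forall i, w i = (q * v i)%Z.
Proof.
move=> [l Hv] nzv Hmin w [o Hw].
have [i1 Hi1] := nzv.
have Hl : l <> 0%R.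
  move=> Hl; apply: Hi1; apply: eq_IZR; rewrite Hv Hl; ring.
pose mu := (o / l)%R.
have Hwv i : IZR (w i) = (mu * IZR (v i))%R by rewrite Hw Hv /mu; field.
pose q := (up mu - 1)%Z.
have [A1 A2] := archimed mu.
have Hq : IZR q = (IZR (up mu) - 1)%R by rewrite /q minus_IZR.
exists q.
pose u i := (w i - q * v i)%Z.
have Hu i : IZR (u i) = ((mu - IZR q) * IZR (v i))%R.
  by rewrite /u minus_IZR mult_IZR Hwv; ring.
case: (excluded_middle_informative (nz u)) => [nzu|nnzu]; last first.
  move=> i; case: (Z.eq_dec (u i) 0) => [H|H]; first by rewrite /u in H; lia.
  by exfalso; apply: nnzu; exists i.
exfalso.
have pu : par D u by exists ((mu - IZR q) * l)%R => i; rewrite Hu Hv; ring.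
have := Hmin u pu nzu.
have H1 := nrm_ge1 nzv.
suff : (nrm u < nrm v)%N by lia.
have : (nrm u <= (nrm v).-1)%N; last by lia.
apply/bigmax_leqP => i _.
case: (Z.eq_dec (v i) 0) => [H0|H0].
  have : u i = 0%Z by apply: eq_IZR; rewrite Hu H0; ring.
  lia.
have Hlt : (Rabs (IZR (u i)) < Rabs (IZR (v i)))%R.
  rewrite Hu Rabs_mult.
  have Hvpos : (0 < Rabs (IZR (v i)))%R by apply: Rabs_pos_lt; move/eq_IZR.
  have -> : Rabs (mu - IZR q) = (mu - IZR q)%R by apply: Rabs_pos_eq; lra.
  have : (mu - IZR q < 1)%R by lra.
  nra.
rewrite !Rabs_Zabs in Hlt; move/lt_IZR: Hlt => Hlt.
have : (Z.abs_nat (v i) <= nrm v)%N by apply: (leq_bigmax i).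
lia.
Qed.
End Geo.

Lemma seq_min (T : eqType) (s : seq T) (f : T -> Z) x : x \in s ->
  exists2 y, y \in s & forall z, z \in s -> (f y <= f z)%Z.
Proof.
elim: s x => // a s IH x; rewrite inE => _.
case: (boolP (has (fun _ => true) s)) => [/hasP [y ys _]|hs].
  have [m ms Hm] := IH y ys.
  case: (Z.le_gt_cases (f a) (f m)) => H.
    exists a; first by rewrite inE eqxx.
    move=> z; rewrite inE => /orP [/eqP ->|zs]; first lia.
    have := Hm z zs; lia.
  exists m; first by rewrite inE ms orbT.
  move=> z; rewrite inE => /orP [/eqP ->|zs]; first lia.
  exact: Hm.
exists a; first by rewrite inE eqxx.
move=> z; rewrite inE => /orP [/eqP ->|zs]; first lia.
by exfalso; move/hasPn: hs => /(_ z zs).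
Qed.


Section Code.
Variables (n k : nat).
Local Notation pt := (point n.+1 k).

Definition dz a (e : {ffun 'I_k -> 'I_(wd a)}) (l : 'I_k) : Z :=
  (Z.of_nat (e l) - offz a)%Z.

Definition lin (p : Z) (b : nat) (d : Z) := (p + Z.of_nat b * d)%Z.
Arguments lin : simpl never.

Definition dec (a : nat) (c : pt * {ffun 'I_k -> 'I_(wd a)} * {set 'I_n.+1}) : {set pt} :=
  [set x | (x == c.1.1) || [exists b in c.2, [forall l,
     Z.eqb (zc x l) (lin (zc c.1.1 l) b.+1 (dz c.1.2 l))]]].

Definition Bs r a := [set B : {set 'I_n.+1} |
   B \subset [set b : 'I_n.+1 | (b < n %/ 2^a)%N] & #|B| == r.-1].

Definition Codes r a : {set pt * {ffun 'I_k -> 'I_(wd a)} * {set 'I_n.+1}} :=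
  setX (setX setT setT) (Bs r a).

Lemma zc_le (x : pt) i : (0 <= zc x i <= Z.of_nat n)%Z.
Proof. rewrite /zc; have := ltn_ord (x i); lia. Qed.

Lemma edge_code (S : {set pt}) : (1 < #|S|)%N -> on_common_line S ->
  exists a : 'I_n.+1, exists2 c, c \in Codes #|S| a & S = dec c.
Proof.
move=> /card_gt1P [x0 [y0 [Hx0 Hy0 Hne]]] Hline.
pose D i := (zc y0 i - zc x0 i)%Z.
have nzD : nz D.
  case: (excluded_middle_informative (nz D)) => // H; exfalso.
  move/eqP: Hne; apply; apply: pt_eq => i.
  case: (Z.eq_dec (D i) 0) => [|Hi]; first by rewrite /D; lia.
  by exfalso; apply: H; exists i.
have pDD : par D D by exists 1%R => i; ring.
have [v [pv nzv vmin]] := min_vec nzD pDD.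
have Hmul := multiple pv nzv vmin.
have Hq : forall x, x \in S -> exists q, forall i, (zc x i - zc x0 i = q * v i)%Z.
  move=> x Hx; exact: Hmul (line_par Hline Hx0 Hy0 Hne Hx).
have [i1 Hi1] := nzv.
pose Q (x : pt) := ((zc x i1 - zc x0 i1) / v i1)%Z.
have HQ : forall x, x \in S -> forall i, (zc x i - zc x0 i = Q x * v i)%Z.
  move=> x Hx; have [q Hqx] := Hq x Hx.
  have -> : Q x = q by rewrite /Q Hqx Z.div_mul.
  exact: Hqx.
have [p0 Hp0 Hp0min] : exists2 p0, p0 \in S & forall z, z \in S -> (Q p0 <= Q z)%Z.
  have [y Hy H] := @seq_min _ (enum S) Q x0 ltac:(by rewrite mem_enum).
  by exists y; [rewrite -mem_enum | move=> z Hz; apply: H; rewrite mem_enum].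
pose T (x : pt) := Z.to_nat (Q x - Q p0).
have HT : forall x, x \in S -> forall i, (zc x i = zc p0 i + Z.of_nat (T x) * v i)%Z.
  move=> x Hx i; have := HQ x Hx i; have := HQ p0 Hp0 i; have := Hp0min x Hx.
  rewrite /T; move: (Q x) (Q p0) => qx qp H1 H2 H3.
  rewrite Z2Nat.id; last lia.
  rewrite Z.mul_sub_distr_r; lia.
have HT0 : forall x, x \in S -> T x = 0%N -> x = p0.
  by move=> x Hx H0; apply: pt_eq => i; rewrite (HT x Hx i) H0; lia.
pose j := nrm v.
have j1 : (1 <= j)%N by apply: nrm_ge1.
have jn : (j <= n)%N.
  apply: leq_trans (vmin _ pDD nzD) _.
  apply/bigmax_leqP => i _; rewrite /D; have := zc_le y0 i; have := zc_le x0 i; lia.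
have Hvj : forall i, (Z.abs_nat (v i) <= j)%N by move=> i; apply: (leq_bigmax i).
pose a := trunc_log 2 j.
have [Ha1 Ha2] : (2^a <= j)%N /\ (j < 2^a.+1)%N.
  by have /andP [? ?] := trunc_log_bounds (isT : (1 < 2)%N) j1.
have an : (a < n.+1)%N.
  have := ltn_expl a (isT : (1 < 2)%N); lia.
have HTj : forall x, x \in S -> (T x * 2^a <= n)%N.
  move=> x Hx; apply: leq_trans (leq_mul (leqnn _) Ha1) _.
  case: (posnP (T x)) => [->|Tpos]; first by rewrite mul0n.
  rewrite mulnC -leq_divRL //; apply/bigmax_leqP => i _; rewrite leq_divRL //.
  have := HT x Hx i; have := zc_le x i; have := zc_le p0 i; nia.
exists (Ordinal an).
pose e : {ffun 'I_k -> 'I_(wd a)} :=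
  [ffun l => @inord (2^(a.+2) - 2) (Z.to_nat (v l + offz a))].
have He : forall l, dz e l = v l.
  have P1 : (2^a.+1 = 2 * 2^a)%N by rewrite expnS.
  have P2 : (2^a.+2 = 4 * 2^a)%N by rewrite !expnS mulnA.
  have P0 : (1 <= 2^a)%N by rewrite expn_gt0.
  move=> l; have Hl := Hvj l; rewrite /dz /e ffunE inordK /offz; last first.
    rewrite P1 in Ha2; rewrite P2 P1; lia.
  rewrite P1 in Ha2 *; lia.
pose f (x : pt) : 'I_n.+1 := inord (T x).-1.
have Hf : forall x, x \in S -> x != p0 -> (T x).-1.+1 = T x /\ (T x).-1 < n.+1 /\ (T x).-1 < n %/ 2^a.
  move=> x Hx Hxp.
  have Tpos : (0 < T x)%N by rewrite lt0n; apply/eqP => /(HT0 x Hx) /eqP; rewrite (negbTE Hxp).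
  have := HTj x Hx; have : (0 < 2^a)%N by rewrite expn_gt0.
  move=> H2 H3; split; first lia.
  have Hd : (T x <= n %/ 2^a)%N by rewrite leq_divRL.
  have := leq_div n (2^a); lia.
exists (p0, e, f @: (S :\ p0)).
  rewrite /Codes !inE /=; apply/andP; split.
    apply/subsetP => b /imsetP [x]; rewrite !inE => /andP [Hxp Hx] ->.
    have [_ [h1 h2]] := Hf x Hx Hxp; by rewrite /f inordK.
  apply/eqP; rewrite card_in_imset.
    by rewrite (cardsD1 p0 S) Hp0.
  move=> x y; rewrite !inE => /andP [Hxp Hx] /andP [Hyp Hy] Hfxy.
  have [e1 [e2 _]] := Hf x Hx Hxp; have [e3 [e4 _]] := Hf y Hy Hyp.
  have Heq : (T x).-1 = (T y).-1.
    by move: (congr1 (@nat_of_ord _) Hfxy); rewrite /f !inordK.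
  apply: pt_eq => i; rewrite (HT x Hx) (HT y Hy); congr (_ + Z.of_nat _ * _)%Z; lia.
apply/setP => x; rewrite inE /=.
apply/idP/idP.
  move=> Hx; case: (eqVneq x p0) => [->|Hxp] //=.
  apply/existsP; exists (f x); rewrite imset_f ?inE ?Hxp //=.
  apply/forallP => l; apply/Z.eqb_eq.
  have [e1 [e2 _]] := Hf x Hx Hxp.
  by rewrite He /lin /f inordK // e1 -HT.
case/orP => [/eqP -> //|/existsP [b /andP [/imsetP [y] Hy Hb /forallP Hl]]].
move: Hy; rewrite !inE => /andP [Hyp Hy].
have [e1 [e2 _]] := Hf y Hy Hyp.
have -> // : x = y.
apply: pt_eq => i; have := Hl i; move/Z.eqb_eq ->.
by rewrite He /lin Hb /f inordK // e1 -HT.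
Qed.
End Code.

Lemma lineb_of (N k : nat) (S : {set point N k}) : on_common_line S -> on_common_lineb S.
Proof. by rewrite /on_common_lineb; case: excluded_middle_informative. Qed.

Lemma lineb_to (N k : nat) (S : {set point N k}) : on_common_lineb S -> on_common_line S.
Proof. by rewrite /on_common_lineb; case: excluded_middle_informative. Qed.

Section Lower1.
Variables (n k r h D : nat).
Hypothesis Hk : (0 < k)%N.
Hypothesis Hr : (1 < r)%N.
Hypothesis HB : (h.-1 + r.-1 * D <= n)%N.
Local Notation pt := (point n.+1 k).

Let i0 : 'I_k := Ordinal Hk.

Definition AP (x : {ffun 'I_k -> 'I_h}) (dv : {ffun 'I_k -> 'I_D}) (i : nat) : pt :=
  [ffun l => inord (x l + i * (dv l).+1)].

Lemma AP_val x dv (i : 'I_r) l : (AP x dv i l : nat) = (x l + i * (dv l).+1)%N.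
Proof.
rewrite /AP ffunE inordK //.
have := ltn_ord (x l); have := ltn_ord (dv l); have := ltn_ord i.
move=> H1 H2 H3.
have : (i * (dv l).+1 <= r.-1 * D)%N by apply: leq_mul; lia.
lia.
Qed.

Definition APset x dv : {set pt} := [set AP x dv (nat_of_ord i) | i : 'I_r].

Lemma APset_edge x dv : APset x dv \in edges n.+1 k r.
Proof.
rewrite /edges inE; apply/andP; split.
  rewrite card_imset ?card_ord // => i j /ffunP /(_ i0) /(congr1 (@nat_of_ord _)).
  rewrite !AP_val => H; apply: val_inj => /=; move: H; move: (dv i0 : nat) => c; nia.
apply: lineb_of.
exists (fun l => INR (x l + 1)), (fun l => INR (dv l).+1); split.
  by exists i0; apply: not_0_INR.
move=> p /imsetP [i _ ->]; exists (INR i) => l.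
rewrite /coord AP_val !plus_INR mult_INR; ring.
Qed.

Lemma APset_inj : injective (fun c : {ffun 'I_k -> 'I_h} * {ffun 'I_k -> 'I_D} => APset c.1 c.2).
Proof.
move=> [x dv] [x' dv'] /= E.
have mem : forall (a b : {ffun 'I_k -> 'I_h}) (u v : {ffun 'I_k -> 'I_D}) (i : 'I_r),
   APset a u = APset b v -> exists j : 'I_r, forall l, (a l + i * (u l).+1 = b l + j * (v l).+1)%N.
  move=> a b u v i Euv.
  have : AP a u i \in APset b v by rewrite -Euv; apply: imset_f.
  case/imsetP => j _ Hj; exists j => l.
  by rewrite -!AP_val Hj.
have i0r : (0 < r)%N by lia.
pose z : 'I_r := Ordinal i0r.
pose o : 'I_r := Ordinal Hr.
have [j1 H1] := mem _ _ _ _ z E.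
have [j2 H2] := mem _ _ _ _ z (esym E).
have Hx : forall l, (x l : nat) = x' l.
  move=> l; have := H1 l; have := H2 l; rewrite /= !mul0n !addn0.
  have := H1 i0; have := H2 i0; rewrite /= !mul0n !addn0.
  nia.
have [j3 H3] := mem _ _ _ _ o E.
have [j4 H4] := mem _ _ _ _ o (esym E).
have Hd : forall l, (dv l : nat) = dv' l.
  move=> l.
  have a1 := H3 l; have a2 := H4 l; have a3 := H3 i0; have a4 := H4 i0.
  rewrite /= !mul1n Hx in a1 a2 a3 a4.
  have e0 := Hx i0.
  have b3 : ((dv i0).+1 = j3 * (dv' i0).+1)%N by lia.
  have b4 : ((dv' i0).+1 = j4 * (dv i0).+1)%N by lia.
  have hj3 : (j3 : nat) = 1%N.
    move: b3 b4; move: (dv i0 : nat) (dv' i0 : nat) (j3 : nat) (j4 : nat) => c c' u v b3 b4.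
    have v0 : (0 < v)%N by case: v b4.
    have hc : (c.+1 <= c'.+1)%N by rewrite b4 leq_pmull.
    have hu : (u * c.+1 <= 1 * c.+1)%N by rewrite mul1n; apply: leq_trans (leq_mul (leqnn u) hc) _; rewrite -b3.
    rewrite leq_pmul2r // in hu.
    by case: u b3 hu => [|[|]].
  rewrite hj3 mul1n in a1; lia.
congr (_, _); apply/ffunP => l; apply: val_inj; [exact: Hx | exact: Hd].
Qed.

Lemma lower1 : (h ^ k * D ^ k <= #|edges n.+1 k r|)%N.
Proof.
have -> : (h ^ k * D ^ k = #|[set: {ffun 'I_k -> 'I_h} * {ffun 'I_k -> 'I_D}]|)%N.
  by rewrite cardsT card_prod !card_ffun !card_ord.
rewrite -(card_imset _ APset_inj).
apply: subset_leq_card; apply/subsetP => S /imsetP [c _ ->].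
exact: APset_edge.
Qed.
End Lower1.

Section Lower3.
Variables (n k r : nat).
Hypothesis Hr : (1 < r)%N.
Local Notation pt := (point n.+1 k).

Definition ptA (i : 'I_k) (y : {ffun 'I_k.-1 -> 'I_n.+1}) (a : 'I_n.+1) : pt :=
  [ffun l => if unlift i l is Some j then y j else a].

Lemma ptA_i i y a : ptA i y a i = a.
Proof. by rewrite ffunE unlift_none. Qed.

Lemma ptA_lift i y a j : ptA i y a (lift i j) = y j.
Proof. by rewrite ffunE liftK. Qed.

Lemma ptA_other i i' y : i != i' -> exists j, forall a, ptA i' y a i = y j.
Proof.
move=> H; case: (unliftP i' i) => [j E|E]; last by rewrite E eqxx in H.
by exists j => a; rewrite E ptA_lift.
Qed.

Definition AXset (c : 'I_k * {ffun 'I_k.-1 -> 'I_n.+1} * {set 'I_n.+1}) : {set pt} :=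
  [set ptA c.1.1 c.1.2 a | a in c.2].

Definition Codes3 := [set c : 'I_k * {ffun 'I_k.-1 -> 'I_n.+1} * {set 'I_n.+1} | #|c.2| == r].

Lemma card_Codes3 : #|Codes3| = (k * n.+1 ^ k.-1 * 'C(n.+1, r))%N.
Proof.
have -> : Codes3 = setX (setX setT setT) [set A : {set 'I_n.+1} | #|A| == r].
  by apply/setP => [[[i y] A]]; rewrite !inE.
by rewrite !cardsX !cardsT card_ffun !card_ord card_draws card_ord.
Qed.

Lemma AXset_edge c : c \in Codes3 -> AXset c \in edges n.+1 k r.
Proof.
case: c => [[i y] A]; rewrite inE /= => /eqP HA.
rewrite /edges inE; apply/andP; split.
  rewrite /AXset card_imset ?HA //= => a b /ffunP /(_ i).
  by rewrite !ptA_i.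
apply: lineb_of.
exists (fun l => coord (ptA i y ord0) l), (fun l => if l == i then 1%R else 0%R); split.
  by exists i; rewrite eqxx; apply: R1_neq_R0.
move=> p /imsetP [a _ ->]; exists (INR a) => l /=.
case: (unliftP i l) => [j ->|->].
  rewrite /coord !ptA_lift; have -> : (lift i j == i) = false by apply/negbTE; rewrite eq_sym neq_lift.
  ring.
rewrite /coord !ptA_i eqxx !plus_INR /=; ring.
Qed.

Lemma AXset_inj : {in Codes3 &, injective AXset}.
Proof.
move=> [[i y] A] [[i' y'] A']; rewrite !inE /= => /eqP HA /eqP HA' E.
have mem : forall a, a \in A -> exists2 a', a' \in A' & ptA i y a = ptA i' y' a'.
  move=> a Ha; have : ptA i y a \in AXset (i', y', A') by rewrite -E; apply: imset_f.
  by case/imsetP => a' Ha' ->; exists a'.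
have : (1 < #|A|)%N by rewrite HA.
case/card_gt1P => a [b [Ha Hb Hab]].
have Hii : i = i'.
  apply/eqP; apply/negPn/negP => Hne.
  have [j Hj] := ptA_other y' Hne.
  have [a' _ Ea] := mem a Ha; have [b' _ Eb] := mem b Hb.
  have : ptA i y a i = ptA i y b i by rewrite Ea Eb !Hj.
  by rewrite !ptA_i => Eab; rewrite Eab eqxx in Hab.
subst i'.
have Hyy : y = y'.
  apply/ffunP => j; have [a' _ Ea] := mem a Ha.
  by rewrite -(ptA_lift i y a j) Ea ptA_lift.
subst y'.
have HAA : forall (B B' : {set 'I_n.+1}), AXset (i, y, B) = AXset (i, y, B') -> B \subset B'.
  move=> B B' EB; apply/subsetP => u Hu.
  have : ptA i y u \in AXset (i, y, B') by rewrite -EB; apply: imset_f.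
  case/imsetP => u' Hu' Eu.
  have : ptA i y u i = ptA i y u' i by rewrite Eu.
  by rewrite !ptA_i => ->.
congr (_, _); apply/eqP; rewrite eqEsubset; apply/andP; split; apply: HAA => //.
Qed.

Lemma lower3 : (k * n.+1 ^ k.-1 * 'C(n.+1, r) <= #|edges n.+1 k r|)%N.
Proof.
rewrite -card_Codes3 -(card_in_imset AXset_inj).
apply: subset_leq_card; apply/subsetP => S /imsetP [c Hc ->].
exact: AXset_edge.
Qed.
End Lower3.

Lemma card_U n m : (m <= n.+1)%N -> #|[set b : 'I_n.+1 | (b < m)%N]| = m.
Proof.
move=> Hm.
rewrite -sum1dep_card big_ord_narrow.
  by []. by rewrite sum1_card card_ord.
Qed.

Lemma card_Codes n k r a : #|Codes n k r a| = term n k r a.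
Proof.
rewrite /Codes !cardsX !cardsT card_ffun !card_ord /Bs cards_draws card_U //.
  by rewrite card_ffun !card_ord.
by apply: leq_trans (leq_div n (2 ^ a)) (leqnSn n).
Qed.

Lemma upper_le n k r : (1 < r)%N -> (#|edges n.+1 k r| <= \sum_(a < n.+1) term n k r a)%N.
Proof.
move=> Hr.
apply: (@leq_trans #|\bigcup_(a : 'I_n.+1) (@dec n k a @: Codes n k r a)|).
  apply: subset_leq_card; apply/subsetP => S; rewrite inE => /andP [/eqP HS Hl].
  have H1 : (1 < #|S|)%N by rewrite HS.
  have [a [c Hc ES]] := edge_code H1 (lineb_to Hl).
  apply/bigcupP; exists a => //; rewrite ES; apply: imset_f; by rewrite -HS.
apply: leq_trans (card_bigcup_le _) _.
apply: leq_sum => a _; rewrite -card_Codes; exact: leq_imset_card.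
Qed.

Lemma big_of_pow r N : (1 <= r)%N -> (2 ^ (100 * r) <= N)%N -> (64 * (r.+1 * r.+1) <= N)%N.
Proof.
move=> Hr H; apply: leq_trans H.
have h1 : (r.+1 <= 2 ^ r)%N by apply: ltn_expl.
have h2 : (64 * (2 ^ r * 2 ^ r) <= 2 ^ (100 * r))%N.
  have e : (2 ^ (r + r + 6) = 64 * (2 ^ r * 2 ^ r))%N by rewrite !expnD mulnC.
  by rewrite -e leq_exp2l //; lia.
apply: leq_trans h2; rewrite leq_mul2l /=; exact: leq_mul.
Qed.

Lemma NL s N : (2 <= s)%N -> (64 * (s.+2 * s.+2) <= N)%N ->
  (N * N <= s.+1 * s.+1 * (N./2 * (N./2 %/ s)))%N.
Proof.
move=> Hs HN.
set h := N./2; set D := h %/ s.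
have HN2 : (N <= 2 * h + 1)%N.
  have := odd_double_half N; rewrite -/h -muln2; case: (odd N) => /=; lia.
have Hh : (2 * h <= N)%N.
  have := odd_double_half N; rewrite -/h -muln2; case: (odd N) => /=; lia.
have Hbig : (4 * (s * s) + s + 1 <= h)%N by nia.
have HD : (h + 1 <= s * D + s)%N.
  have := divn_eq h s; have := ltn_pmod h (ltnW Hs); rewrite -/D; lia.
have sa : (s * (N * N) <= s * ((2 * h + 1) * (2 * h + 1)))%N.
  by rewrite leq_mul2l; apply/orP; right; apply: leq_mul.
have sb : (s * ((2 * h + 1) * (2 * h + 1)) <= (4 * s + 1) * (h * (h + 1 - s)))%N.
  have e1 : (h + 1 - s + s = h + 1)%N by lia.
  move: (h + 1 - s)%N e1 => u e1.
  nia.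
have sc : ((4 * s + 1) * (h * (h + 1 - s)) <= s.+1 * s.+1 * (h * (s * D)))%N.
  apply: leq_mul; first by nia.
  apply: leq_mul => //; lia.
have : (s * (N * N) <= s * (s.+1 * s.+1 * (h * D)))%N.
  apply: leq_trans sa _; apply: leq_trans sb _; apply: leq_trans sc _; lia.
by rewrite leq_pmul2l //; lia.
Qed.

Lemma real_div_le2 (a b c : nat) : (0 < b)%N -> (a <= b * c)%N -> (INR a / INR b <= INR c)%R.
Proof.
move=> Hb H.
have Hb' : (0 < INR b)%R by apply: lt_0_INR; apply/ltP.
have H2 : (INR a <= INR b * INR c)%R by rewrite -mult_INR; apply: le_INR; apply/leP; rewrite multE.
apply: (Rmult_le_reg_r (INR b)) => //.
have -> : (INR a / INR b * INR b = INR a)%R by field; lra.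
lra.
Qed.

Lemma lower_12 n k r : (3 <= k)%N -> (3 <= r)%N -> (2 ^ (100 * r) <= n.+1)%N ->
  (INR n.+1 ^ (2 * k) / INR r ^ (2 * k) <= INR #|edges n.+1 k r|)%R.
Proof.
move=> Hk Hr HN.
have [s Es] : exists s, r = s.+1 by exists r.-1; lia.
subst r.
set N := n.+1.
set h := N./2; set D := h %/ s.
have H64 : (64 * (s.+2 * s.+2) <= N)%N by apply: big_of_pow => //; lia.
have Hh : (2 * h <= N)%N.
  have := odd_double_half N; rewrite -/h -muln2; case: (odd N) => /=; lia.
have HsD : (s * D <= h)%N by rewrite mulnC leq_divM.
have HB : (h.-1 + s.+1.-1 * D <= n)%N by rewrite /=; lia.
have L1 := @lower1 n k s.+1 h D (ltnW (ltnW Hk)) (ltnW Hr) HB.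
have Hs2 : (2 <= s)%N by lia.
have HNL := NL Hs2 H64.
rewrite -/h -/D in HNL.
have key : (N ^ (2 * k) <= s.+1 ^ (2 * k) * #|edges n.+1 k s.+1|)%N.
  apply: (@leq_trans (s.+1 ^ (2 * k) * (h ^ k * D ^ k))%N); last by rewrite leq_mul2l L1 orbT.
  rewrite -expnMn !expnM -!expnMn; apply: expn_mono.
  by rewrite (_ : s.+1 ^ 2 = s.+1 * s.+1)%N // (_ : N ^ 2 = N * N)%N.
rewrite -!INR_expn; apply: real_div_le2 => //.
by rewrite expn_gt0.
Qed.

Lemma fact_INR_pos m : (0 < INR m`!)%R.
Proof. by apply: lt_0_INR; apply/ltP; rewrite fact_gt0. Qed.

Lemma upper_1 n k r : (3 <= r)%N -> (r <= k)%N -> (r <= n)%N ->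
  (INR #|edges n.+1 k r| <= INR k * 2 ^ (r + k) / INR (r`!) * INR n.+1 ^ (2 * k))%R.
Proof.
move=> Hr Hrk Hrn.
have [s Es] : exists s, r = s.+1 by exists r.-1; lia.
subst r.
have key : (s.+1`! * #|edges n.+1 k s.+1| <= k * 2 ^ (s.+1 + k) * n.+1 ^ (2 * k))%N.
  apply: leq_trans (leq_mul (leqnn _) (upper_le n k (ltnW Hr))) _.
  apply: sum_case1; lia.
apply: Rle_trans (real_div_le (fact_gt0 _) key) _.
rewrite !mult_INR INR_pow2 INR_expn.
have := fact_INR_pos s.+1; move=> Hf.
apply: Req_le; field; split; apply: not_0_INR => //; apply/eqP; rewrite -lt0n; exact: (fact_gt0 s).
Qed.

Lemma upper_3 n k r : (3 <= k)%N -> (k.+1 < r)%N ->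
  (INR #|edges n.+1 k r| <= INR k * 2 ^ (r + k + 1) / INR (r`!) * INR n.+1 ^ (r + k - 1))%R.
Proof.
move=> Hk Hr.
have [s Es] : exists s, r = s.+1 by exists r.-1; lia.
subst r.
have Hks : (k < s)%N by lia.
have key : (s.+1`! * #|edges n.+1 k s.+1| <= k * 2 ^ (s.+1 + k + 1) * n.+1 ^ (s.+1 + k - 1))%N.
  apply: leq_trans (leq_mul (leqnn _) (upper_le n k (_ : 1 < s.+1)%N)) _; first lia.
  rewrite factS -mulnA.
  apply: (@leq_trans (s.+1 * (2 * (4 ^ k * n.+1 ^ (k + s))))%N).
    by apply: leq_mul => //; apply: sum_case3.
  have h3 := NI3 (ltnW (ltnW Hk)) Hks.
  rewrite (_ : s.+1 + k - 1 = k + s)%N; last by lia.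
  rewrite addn1 expnS.
  move: h3; move: (4 ^ k) (2 ^ (s.+1 + k)) (n.+1 ^ (k + s)) => X Y Z0 h3.
  have -> : (s.+1 * (2 * (X * Z0)) = 2 * (s.+1 * X) * Z0)%N by lia.
  have -> : (k * (2 * Y) * Z0 = 2 * (k * Y) * Z0)%N by lia.
  by apply: leq_mul => //; rewrite leq_mul2l h3 orbT.
apply: Rle_trans (real_div_le (fact_gt0 _) key) _.
rewrite !mult_INR INR_pow2 INR_expn.
have := fact_INR_pos s.+1; move=> Hf.
apply: Req_le; field; split; apply: not_0_INR => //; apply/eqP; rewrite -lt0n; exact: (fact_gt0 s).
Qed.

Lemma upper_2 n k : (3 <= k)%N -> (2 <= n)%N -> (300 <= log2 (INR n.+1))%R ->
  (INR #|edges n.+1 k k.+1| <=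
     INR k * 2 ^ (k.+1 + k) / INR (k.+1`!) * INR n.+1 ^ (2 * k) * log2 (INR n.+1))%R.
Proof.
move=> Hk Hn HL.
set t := trunc_log 2 n.
have key : (k`! * #|edges n.+1 k k.+1| <= t.+1 * (4 ^ k * n.+1 ^ (2 * k)))%N.
  have H1 : (1 < k.+1)%N by lia.
  apply: leq_trans (leq_mul (leqnn _) (upper_le n k H1)) _.
  apply: sum_case2; lia.
have Ht : (INR t <= log2 (INR n.+1))%R.
  apply: (@log_ge_of_pow n.+1 t); apply: (@leq_trans n); [apply: trunc_logP => //; lia | exact: leqnSn].
apply: Rle_trans (real_div_le (fact_gt0 _) key) _.
set L := log2 (INR n.+1) in HL Ht *.
rewrite factS !mult_INR !INR_expn.
have E4 : (INR 4 ^ k = 2 ^ (2 * k))%R.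
  by rewrite pow_mult (_ : INR 4 = 2 ^ 2)%R //; rewrite /=; lra.
have E2 : (2 ^ (k.+1 + k) = 2 * 2 ^ (2 * k))%R.
  rewrite (_ : k.+1 + k = (2 * k).+1)%N; last by lia.
  by rewrite /=.
rewrite E4 E2.
have Hf := fact_INR_pos k.
have Hp : (0 < 2 ^ (2 * k))%R by apply: pow_lt; lra.
have HN : (0 < INR n.+1 ^ (2 * k))%R by apply: pow_lt; apply: lt_0_INR; lia.
have Hk1 : (0 < INR k.+1)%R by apply: lt_0_INR; lia.
have Hk3 : (3 <= INR k)%R by have := le_INR 3 k ltac:(lia); rewrite /=; lra.
have Ht0 : (0 <= INR t)%R by apply: pos_INR.
set P := (2 ^ (2 * k) * INR n.+1 ^ (2 * k) / (INR k.+1 * INR k`!))%R.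
have HP : (0 < P)%R.
  rewrite /P; apply: Rdiv_lt_0_compat; [apply: Rmult_lt_0_compat | apply: Rmult_lt_0_compat] => //.
have -> : (INR t.+1 * (2 ^ (2 * k) * INR n.+1 ^ (2 * k)) / INR k`! = (INR t.+1 * INR k.+1) * P)%R.
  rewrite /P; field; lra.
have -> : (INR k * (2 * 2 ^ (2 * k)) / (INR k.+1 * INR k`!) * INR n.+1 ^ (2 * k) * L =
           (2 * INR k * L) * P)%R.
  rewrite /P; field; lra.
apply: Rmult_le_compat_r; first lra.
rewrite S_INR S_INR; nra.
Qed.

Theorem claim4p1 (n k r : nat) :
  (3 <= n)%N -> (3 <= k)%N -> (3 <= r)%N ->
  (INR r <= 0.01 * log2 (INR n))%R ->
  (INR k <= 0.01 * log2 (INR n))%R ->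
  ((r <= k)%N ->
     (INR n ^ (2 * k) / INR r ^ (2 * k) <= INR (eH n k r))%R /\
     (INR (eH n k r) <= INR k * 2 ^ (r + k) / INR (r`!) * INR n ^ (2 * k))%R) /\
  (r = k.+1 ->
     (INR n ^ (2 * k) / INR r ^ (2 * k) <= INR (eH n k r))%R /\
     (INR (eH n k r) <=
        INR k * 2 ^ (r + k) / INR (r`!) * INR n ^ (2 * k) * log2 (INR n))%R) /\
  ((k.+1 < r)%N -> (r <= 2 * k)%N ->
     (INR k * INR 'C(n, r) * INR n ^ (k - 1) <= INR (eH n k r))%R /\
     (INR (eH n k r) <= INR k * 2 ^ (r + k + 1) / INR (r`!) * INR n ^ (r + k - 1))%R).
Proof.
move=> Hn Hk Hr Hrl Hkl.
have Hn1 : (1 <= n)%N by lia.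
have Hrn := pow_le_of_log Hn1 Hrl.
have HL : (300 <= log2 (INR n))%R.
  have : (3 <= INR r)%R by have := le_INR 3 r ltac:(lia); rewrite /=; lra.
  lra.
case: n Hn Hn1 Hrn Hrl Hkl HL => [//|n] Hn Hn1 Hrn Hrl Hkl HL.
rewrite /eH.
have Hrn' : (r <= n)%N.
  have h1 : (r < 2 ^ r)%N by apply: ltn_expl.
  have h2 : (2 ^ r <= 2 ^ (100 * r))%N by rewrite leq_exp2l //; lia.
  lia.
split; [|split].
- move=> Hrk; split; [exact: lower_12 | exact: upper_1].
- move=> Er; subst r; split; [exact: lower_12 | apply: upper_2 => //; lia].
- move=> Hkr Hr2k; split; last exact: upper_3.
  have E : (INR k * INR 'C(n.+1, r) * INR n.+1 ^ (k - 1) =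
            INR (k * n.+1 ^ k.-1 * 'C(n.+1, r)))%R.
    by rewrite !mult_INR INR_expn subn1; ring.
  rewrite E; apply: le_INR; apply/leP; apply: lower3; lia.
Qed.
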